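(* Let $n$ be an integer and $\mathbb F$ a field whose characteristic does not divide $2n$. Then the polynomial $S_{n-1}$ is separable over $\mathbb F$, and $(\Delta_n,S_{n-1})=(1)$ in $\mathbb F[\omega]$, where $\Delta_n=S_n'S_{n-1}-S_nS_{n-1}'$.
   Context: The Chebyshev polynomials $S_j(\omega)\in\mathbb Z[\omega]$ are defined for all integers $j$ by $S_0=1$, $S_1=\omega$, $S_{j+1}=\omega S_j-S_{j-1}$, and are considered over $\mathbb F$ by reduction; primes denote derivatives with respect to $\omega$. *)

(* Defs.v *)
From HB Require Import structures.
From mathcomp Require Import all_boot all_order all_algebra all_field.
Set Implicit Arguments. Unset Strict Implicit. Unset Printing Implicit Defensive.
Import GRing.Theory.
Local Open Scope ring_scope.

Fixpoint chebS_nat (R : nzRingType) (j : nat) : {poly R} :=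
  match j with
  | 0 => 1
  | 1 => 'X
  | (k.+1 as k1).+1 => 'X * chebS_nat R k1 - chebS_nat R k
  end.

(* Extension to all integers j using the recurrence backwards:
   S_{-1} = 0 and S_{-j} = - S_{j-2} for j >= 2.
   Negz k denotes -(k+1). *)
Definition chebS (R : nzRingType) (j : int) : {poly R} :=
  match j with
  | Posz k => chebS_nat R k
  | Negz 0 => 0
  | Negz k.+1 => - chebS_nat R k
  end.

Definition chebDelta (R : nzRingType) (n : int) : {poly R} :=
  (chebS R n)^`() * chebS R (n - 1) - chebS R n * (chebS R (n - 1))^`().

(* Main.v *)
Require Import Defs.
From HB Require Import structures.
From mathcomp Require Import all_boot all_order all_algebra all_field.
From mathcomp Require Import zify ring.
Local Open Scope ring_scope.
Import GRing.Theory.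

Section Cheb.
Variable F : fieldType.
Local Notation S := (chebS F).

Lemma chebR (j : int) : S (j + 1) = 'X * S j - S (j - 1).
Proof.
case: j => [[|[|k]]|[|[|k]]].
- by rewrite mulr1 subr0.
- by [].
- have -> : (k.+2%:Z + 1 = k.+3%:Z :> int)%R by lia.
  by have -> : (k.+2%:Z - 1 = k.+1%:Z :> int)%R by lia.
- rewrite -[Negz 0 + 1]/(Posz 0) -[Negz 0 - 1]/(Negz 1) /=.
  by rewrite mulr0 sub0r opprK.
- rewrite -[Negz 1 + 1]/(Negz 0) -[Negz 1 - 1]/(Negz 2) /=.
  by rewrite mulrN mulr1 opprK addNr.
- have -> : (Negz k.+2 + 1 = Negz k.+1 :> int)%R by lia.
  have -> : (Negz k.+2 - 1 = Negz k.+3 :> int)%R by lia.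
  rewrite /=; ring.
Qed.

Lemma int_ind2 (P : int -> Prop) : P 0 -> P (-1) ->
  (forall j, P (j - 1) -> P j -> P (j + 1)) ->
  (forall j, P j -> P (j + 1) -> P (j - 1)) -> forall j, P j.
Proof.
move=> P0 Pm1 Hf Hb.
have Hpos : forall k : nat, P k%:Z /\ P (k%:Z - 1).
  elim=> [|k [IH1 IH2]]; first by split.
  have e1 : (k.+1%:Z = k%:Z + 1 :> int)%R by lia.
  have e2 : (k.+1%:Z - 1 = k%:Z :> int)%R by lia.
  rewrite e2 e1; split=> //; exact: Hf.
have Hneg : forall k : nat, P (- k%:Z) /\ P (- k%:Z + 1).
  elim=> [|k [IH1 IH2]]; first by rewrite oppr0 add0r; split=> //; exact: (Hpos 1%N).1.
  have e1 : (- k.+1%:Z = - k%:Z - 1 :> int)%R by lia.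
  have e2 : (- k.+1%:Z + 1 = - k%:Z :> int)%R by lia.
  rewrite e2 e1; split=> //; exact: Hb.
case=> k; first exact: (Hpos k).1.
have e : (Negz k = - k.+1%:Z :> int)%R by lia.
rewrite e; exact: (Hneg k.+1).1.
Qed.

Definition fC (j : int) := S j ^+ 2 - S (j + 1) * S (j - 1).

Lemma fC_step j : fC (j + 1) = fC j.
Proof. rewrite /fC (chebR (j + 1)) addrK (chebR j); ring. Qed.

Lemma cassini j : S j ^+ 2 - S (j + 1) * S (j - 1) = 1.
Proof.
apply: (@int_ind2 (fun j => fC j = 1)) => //.
- rewrite /fC add0r sub0r /=. by rewrite mulr0 subr0 expr1n.
- rewrite /fC addNr /=.
  by rewrite expr2 mul0r sub0r mul1r opprK.
- by move=> k _ h; rewrite fC_step.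
- by move=> k h _; rewrite -(fC_step (k - 1)) subrK.
Qed.

Definition gD (j : int) : {poly F} :=
  (4 - 'X ^+ 2) * (S j)^`() - ((2 * (j + 1))%:~R * S (j - 1) - j%:~R * 'X * S j).

Lemma Sm2 j : S (j - 1 - 1) = 'X * S (j - 1) - S j.
Proof. have h := chebR (j - 1); rewrite subrK in h; rewrite h; ring. Qed.

Lemma derS j : (S (j + 1))^`() = S j + 'X * (S j)^`() - (S (j - 1))^`().
Proof. by rewrite chebR derivB derivM derivX mul1r. Qed.

Lemma gD_step j : gD (j + 1) = 'X * gD j - gD (j - 1).
Proof.
rewrite /gD derS addrK Sm2 (chebR j).
rewrite !rmorphD /= !rmorphM /=. ring.
Qed.

Lemma gD0 j : gD j = 0.
Proof.
apply: (@int_ind2 (fun j => gD j = 0)).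
- rewrite /gD add0r sub0r /= derivC mulr0 sub0r mulr0 mul0r mul0r subrr.
  by rewrite oppr0.
- rewrite /gD. have -> : chebS F (-1) = 0 by [].
  rewrite deriv0; ring.
- move=> k h1 h2; first [ by rewrite gD_step h1 h2 mulr0 subrr |
  have := gD_step (k - 1); rewrite subrK h2 h1 mulr0 sub0r;
  by move/eqP; rewrite eq_sym oppr_eq0 => /eqP ].
- move=> k h1 h2; have := gD_step k; rewrite h1 h2 mulr0 sub0r.
  by move/eqP; rewrite eq_sym oppr_eq0 => /eqP.
Qed.

End Cheb.

Theorem lemma5p5 (F : fieldType) (n : int)
  (hchar : ((2 * n)%:~R : F) != 0) :
  separable_poly (chebS F (n - 1)) /\ coprimep (chebDelta F n) (chebS F (n - 1)).
Proof.
set m := n - 1.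
have hn : n = m + 1 by rewrite /m subrK.
have C := cassini F m; rewrite -hn in C.
have G := gD0 F m; rewrite /gD -hn in G.
set Sm := chebS F m in C G *.
set Sn := chebS F n in C *.
set Sm1 := chebS F (m - 1) in C G *.
set c : {poly F} := (2 * n)%:~R.
have cP : c = ((2 * n)%:~R : F)%:P by rewrite /c rmorph_int.
set u := c * Sm - Sn * m%:~R * 'X.
set v := - Sn * (4 - 'X ^+ 2).
have E1 : u * Sm + v * Sm^`() = c.
  apply/eqP; rewrite -subr_eq0.
  have -> : u * Sm + v * Sm^`() - c = c * (Sm ^+ 2 - Sn * Sm1 - 1) - Sn *
    ((4 - 'X ^+ 2) * Sm^`() - ((2 * n)%:~R * Sm1 - m%:~R * 'X * Sm)).
    rewrite /u /v /c; ring.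
  by rewrite C G subrr mulr0 mulr0 subrr.
split.
  rewrite unlock; apply/Bezout_coprimepP; exists (u, v) => /=.
  by rewrite E1 cP polyC_eqp1.
apply/Bezout_coprimepP; exists (v * Sm1, u + v * Sm * Sm^`() - v * Sm1 * Sn^`()) => /=.
have -> : chebDelta F n = Sn^`() * Sm - Sn * Sm^`() by [].
have -> : v * Sm1 * (Sn^`() * Sm - Sn * Sm^`()) +
  (u + v * Sm * Sm^`() - v * Sm1 * Sn^`()) * Sm =
  v * Sm^`() * (Sm ^+ 2 - Sn * Sm1 - 1) + (u * Sm + v * Sm^`()) by ring.
by rewrite C subrr mulr0 add0r E1 cP polyC_eqp1.
Qed.
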